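(* Let $\mathcal{T}$ be a tower with $\mathbb{K}_0=\emptyset$ whose maps are elementary inclusions or elementary contractions (named by the naming convention below), let $\hat{\mathbb{K}}_0,\dots,\hat{\mathbb{K}}_m$ be its active small coning construction and $\mathcal{W}$ its contracting forest. Let $x$ be an internal node of $\mathcal{W}$ with children $y_1,y_2$. Then $c(x)\le 2\cdot|E(y_1)\setminus E(y_2)|$.
   Context: Elementary inclusion: $\mathbb{K}_{i+1}=\mathbb{K}_i\cup\{\sigma\}$, $\sigma\notin\mathbb{K}_i$. Elementary contraction of distinct vertices $u,v$: for one of them, say $v$, the vertex set of $\mathbb{K}_{i+1}$ is that of $\mathbb{K}_i$ minus $v$, $\phi_i(u)=\phi_i(v)=u$, identity elsewhere, $\mathbb{K}_{i+1}=\phi_i(\mathbb{K}_i)$. Active small coning construction: $\hat{\mathbb{K}}_0=\emptyset$; vertices flagged active/inactive, simplex active iff all its vertices are; $\mathrm{Act}\overline{\mathrm{St}}(w,\hat{\mathbb{K}}_i)$ = active simplices of $\hat{\mathbb{K}}_i$ in the closed star of $w$. Inclusion of $\sigma$: add $\sigma$ (new vertex active). Contraction of $u,v$: if $|\mathrm{Act}\overline{\mathrm{St}}(u,\hat{\mathbb{K}}_i)|\le|\mathrm{Act}\overline{\mathrm{St}}(v,\hat{\mathbb{K}}_i)|$, $\hat{\mathbb{K}}_{i+1}=\hat{\mathbb{K}}_i\cup\{\{v\}\cup\tau:\tau\in\mathrm{Act}\overline{\mathrm{St}}(u,\hat{\mathbb{K}}_i)\}$ and $u$ is marked inactive; otherwise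 symmetric. Naming convention: each contraction maps $u,v$ to the vertex not marked inactive. Contracting forest: $\mathcal{W}_0=\emptyset$; inclusion of a simplex of positive dimension leaves the forest unchanged; inclusion of a vertex $w$ adds a single-node tree labeled $w$; a contraction of $u,v$ makes the roots labeled $u$ and $v$ the two children of a new root labeled with the image vertex; $\mathcal{W}=\mathcal{W}_m$. Each internal node $x$ corresponds to one contraction $\phi_i$, and its cost is $c(x)=|\hat{\mathbb{K}}_{i+1}\setminus\hat{\mathbb{K}}_i|$; leaves have cost $0$. Let $\Sigma$ be the collection of simplices added at elementary inclusions; for $\sigma\in\Sigma$ added by $\phi_i$, each vertex of $\sigma$ labels a root of $\mathcal{W}_{i+1}$, i.e., corresponds to a node of $\mathcal{W}$; $E(x)$ is the set of $\sigma\in\Sigma$ with at least one vertex whose node lies in the subtree rooted at $x$. *)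

(* Defs.v *)
From mathcomp Require Import all_boot.
From mathcomp Require Import finmap.

Set Implicit Arguments.
Unset Strict Implicit.
Unset Printing Implicit Defensive.

Local Open Scope fset_scope.

Notation simplex := {fset nat}.
Notation complex := {fset {fset nat}}.

(* A tower starting at K_0 = empty is given by the list of its elementary
   maps phi_0, ..., phi_{m-1}.  [Incl s] is the elementary inclusion of the
   simplex s; [Contr a b] is the elementary contraction of the vertices a, b
   (which of the two disappears is fixed by the naming convention, i.e. by
   the active small coning construction below). *)
Inductive step := Incl of simplex | Contr of nat & nat.

Definition is_vertex (w : nat) (L : complex) : bool :=
  [exists s : L, w \in val s].

Definition closed_star (w : nat) (L : complex) : complex :=
  [fset t in L | [exists r : L, (w \in val r) && (t `<=` val r)]].

Definition act_star (w : nat) (L : complex) (act : {fset nat}) : complex :=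
  [fset t in closed_star w L | t `<=` act].

(* state of the construction after i steps: K_i, Khat_i, active vertices *)
Record cstate := CState { cK : complex; cKh : complex; cAct : {fset nat} }.

Definition init_state : cstate := CState fset0 fset0 fset0.

(* For a contraction of a, b: returns (u, v) where u is the vertex marked
   inactive (and removed from the tower), v the surviving vertex. *)
Definition ord_pair (st : cstate) (a b : nat) : nat * nat :=
  if #|` act_star a (cKh st) (cAct st)| <= #|` act_star b (cKh st) (cAct st)|
  then (a, b) else (b, a).

Definition contr_map (u v w : nat) : nat := if w == u then v else w.

Definition next_state (st : cstate) (s : step) : cstate :=
  match s with
  | Incl sg =>
      CState (sg |` cK st) (sg |` cKh st)
             (if #|` sg| == 1 then cAct st `|` sg else cAct st)
  | Contr a b =>
      let uv := ord_pair st a b in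
      let u := uv.1 in let v := uv.2 in
      CState [fset [fset contr_map u v w | w in (t : simplex)] | t in cK st]
             (cKh st `|` [fset (v |` (t : simplex)) | t in act_star u (cKh st) (cAct st)])
             (cAct st `\ u)
  end.

Definition state (T : seq step) (i : nat) : cstate :=
  foldl next_state init_state (take i T).

Definition Kc (T : seq step) (i : nat) : complex := cK (state T i).
Definition Khat (T : seq step) (i : nat) : complex := cKh (state T i).

Definition stepn (T : seq step) (i : nat) : step := nth (Incl fset0) T i.

(* Validity of the tower: elementary inclusions add a new nonempty simplex
   all of whose nonempty proper faces are present (so every K_i is a
   simplicial complex), new vertices are fresh; elementary contractions
   contract two distinct vertices of K_i. *)
Definition valid_tower (T : seq step) : Prop :=
  forall i, i < size T ->
  match stepn T i with
  | Incl sg =>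
      [/\ sg != fset0, sg \notin Kc T i,
          (forall t : simplex, t `<` sg -> t != fset0 -> t \in Kc T i) &
          (forall w, #|` sg| = 1 -> w \in sg ->
             forall j, j <= i -> ~~ is_vertex w (Kc T j))]
  | Contr a b => [/\ a != b, is_vertex a (Kc T i) & is_vertex b (Kc T i)]
  end.

(* ---- contracting forest ----
   Nodes of W are the indices j of the steps that are vertex inclusions
   (leaves) or contractions (internal nodes). Step j produces a root whose
   label is the included vertex, resp. the image vertex of the contraction. *)
Definition produces (T : seq step) (j w : nat) : bool :=
  match stepn T j with
  | Incl sg => sg == [fset w]
  | Contr a b => (ord_pair (state T j) a b).2 == w
  end.

(* the root of W_i labeled w (the latest node created before step i with
   label w) *)
Definition node_of (T : seq step) (w i : nat) : option nat :=
  last None [seq Some j | j <- iota 0 i & produces T j w].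

Definition children (T : seq step) (x : nat) : seq nat :=
  match stepn T x with
  | Contr a b => pmap id [:: node_of T a x; node_of T b x]
  | Incl _ => [::]
  end.

Definition is_internal (T : seq step) (x : nat) : bool :=
  (x < size T) && (if stepn T x is Contr _ _ then true else false).

(* z lies in the subtree rooted at x (fuel-bounded; children have smaller
   indices, so fuel x.+1 suffices) *)
Fixpoint in_sub (T : seq step) (f z x : nat) : bool :=
  (z == x) ||
  (if f is f'.+1 then has (fun y => in_sub T f' z y) (children T x) else false).

Definition in_subtree (T : seq step) (z x : nat) : bool := in_sub T x.+1 z x.

Definition E (T : seq step) (y : nat) : complex :=
  [fset sg | sg in
     pmap (fun i => match stepn T i with
                    | Incl sg =>
                        if [exists w : sg,
                              if node_of T (val w) i.+1 is Some n
                              then in_subtree T n y else false]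
                        then Some sg else None
                    | Contr _ _ => None
                    end) (iota 0 (size T))].

Definition cost (T : seq step) (x : nat) : nat :=
  #|` Khat T x.+1 `\` Khat T x|.

(* Main.v *)
Require Import Defs.
From mathcomp Require Import all_boot.
From mathcomp Require Import finmap.
From mathcomp Require Import zify.

Module Aux.
Set Implicit Arguments.
Unset Strict Implicit.
Unset Printing Implicit Defensive.
Local Open Scope fset_scope.

Lemma stateS T i : i < size T ->
  state T i.+1 = next_state (state T i) (stepn T i).
Proof.
move=> Hi; rewrite /state (take_nth (Incl fset0) Hi) -cats1 foldl_cat //.
Qed.

Lemma is_vertexP w (L : complex) :
  reflect (exists2 s, s \in L & w \in s) (is_vertex w L).
Proof.
apply: (iffP existsP) => [[s Hs]|[s Hs Hw]].
  by exists (val s) => //; apply: fsvalP.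
by exists [` Hs].
Qed.

Definition smap (st : cstate) (s : step) (w : nat) : nat :=
  match s with
  | Incl _ => w
  | Contr a b => contr_map (ord_pair st a b).1 (ord_pair st a b).2 w
  end.

Fixpoint Fm (T : seq step) (p k : nat) (w : nat) : nat :=
  match k with
  | 0 => w
  | k'.+1 => smap (state T (p + k')) (stepn T (p + k')) (Fm T p k' w)
  end.

Lemma Fm_add T p k1 k2 w : Fm T p (k1 + k2) w = Fm T (p + k1) k2 (Fm T p k1 w).
Proof.
elim: k2 => [|k2 IH] /=; first by rewrite addn0.
by rewrite addnS /= IH addnA.
Qed.

Lemma ord_pair_spec st a b :
  let uv := ord_pair st a b in
  ((uv.1 == a) && (uv.2 == b) || (uv.1 == b) && (uv.2 == a)) &&
  (#|` act_star uv.1 (cKh st) (cAct st)| <= #|` act_star uv.2 (cKh st) (cAct st)|).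
Proof.
rewrite /ord_pair; case: ifP => H /=; rewrite !eqxx ?orbT ?H //=.
by rewrite ltnW // ltnNge H.
Qed.

Lemma produces_uniq T j l1 l2 : produces T j l1 -> produces T j l2 -> l1 = l2.
Proof.
rewrite /produces; case: (stepn T j) => [sg|a b].
  by move=> /eqP -> /eqP /fsetP /(_ l1); rewrite !in_fset1 eqxx => /esym/eqP.
by move=> /eqP <- /eqP.
Qed.

Lemma node_ofS T w i :
  node_of T w i.+1 = if produces T i w then Some i else node_of T w i.
Proof.
rewrite /node_of -addn1 iotaD add0n filter_cat map_cat /=.
case: ifP => //= _; last by rewrite cats0.
by rewrite last_cat.
Qed.

Lemma node_of0 T w : node_of T w 0 = None.
Proof. by []. Qed.

Lemma node_of_lt T w i n : node_of T w i = Some n -> n < i /\ produces T n w.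
Proof.
elim: i n => [|i IH] n //; rewrite node_ofS; case: ifP => [H [<-]|_ /IH [H1 H2]].
  by [].
by split => //; apply: ltnW.
Qed.

Lemma in_sub_mono T f g z y : f <= g -> in_sub T f z y -> in_sub T g z y.
Proof.
elim: f g y => [|f IH] [|g] y //= Hfg; first by move=> /orP [->|].
  by case/orP=> [->//|/hasP [c Hc Hin]]; apply/orP; right; apply/hasP; exists c => //; apply: IH.
Qed.

Lemma children_lt T x c : c \in children T x -> c < x /\
   exists a b, stepn T x = Contr a b /\ (node_of T a x = Some c \/ node_of T b x = Some c).
Proof.
rewrite /children; case: (stepn T x) => // a b.
case Ha: (node_of T a x) => [na|]; case Hb: (node_of T b x) => [nb|] //=;
  rewrite ?inE => Hc.
- case/orP: Hc => /eqP ->.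
  + by split; [case: (node_of_lt Ha)|exists a, b; auto].
  + by split; [case: (node_of_lt Hb)|exists a, b; auto].
- move/eqP: Hc => ->; by split; [case: (node_of_lt Ha)|exists a, b; auto].
- move/eqP: Hc => ->; by split; [case: (node_of_lt Hb)|exists a, b; auto].
Qed.


Definition uof T i a b := (ord_pair (state T i) a b).1.
Definition vof T i a b := (ord_pair (state T i) a b).2.

Lemma Kc_incl T i sg : i < size T -> stepn T i = Incl sg ->
  Kc T i.+1 = sg |` Kc T i.
Proof. by move=> Hi E; rewrite /Kc stateS // E. Qed.

Lemma Kc_contr T i a b : i < size T -> stepn T i = Contr a b ->
  Kc T i.+1 = [fset [fset contr_map (uof T i a b) (vof T i a b) w | w in (t : simplex)] | t in Kc T i].
Proof. by move=> Hi E; rewrite /Kc stateS // E. Qed.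

Lemma uv_spec T i a b : let u := uof T i a b in let v := vof T i a b in
  ((u == a) && (v == b) || (u == b) && (v == a)).
Proof. by have /andP[] := ord_pair_spec (state T i) a b. Qed.

Lemma valid_contr T i a b : valid_tower T -> i < size T -> stepn T i = Contr a b ->
  [/\ uof T i a b != vof T i a b, is_vertex (uof T i a b) (Kc T i) &
      is_vertex (vof T i a b) (Kc T i)].
Proof.
move=> HT Hi E; have := HT i Hi; rewrite E => -[Hab Ha Hb].
by case/orP: (uv_spec T i a b) => /andP[/eqP -> /eqP ->]; split; rewrite // eq_sym.
Qed.

Lemma vertex_fwd T i w : valid_tower T -> i < size T ->
  is_vertex w (Kc T i) -> is_vertex (smap (state T i) (stepn T i) w) (Kc T i.+1).
Proof.
move=> HT Hi /is_vertexP [s Hs Hw].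
case E: (stepn T i) => [sg|a b] /=.
  by rewrite (Kc_incl Hi E); apply/is_vertexP; exists s => //; rewrite in_fset1U Hs orbT.
rewrite (Kc_contr Hi E); apply/is_vertexP.
exists [fset contr_map (uof T i a b) (vof T i a b) w0 | w0 in s].
  by apply/imfsetP; exists s.
by apply/imfsetP; exists w.
Qed.

Lemma cm_neq u v w : u != v -> contr_map u v w != u.
Proof. by move=> H; rewrite /contr_map; case: ifP => [_|/negbT //]; rewrite eq_sym. Qed.

Lemma vertex_back_contr T i a b w : i < size T -> stepn T i = Contr a b ->
  valid_tower T -> is_vertex w (Kc T i.+1) ->
  [/\ is_vertex w (Kc T i), w != uof T i a b &
      exists2 w0, is_vertex w0 (Kc T i) & w = contr_map (uof T i a b) (vof T i a b) w0].
Proof.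
move=> Hi E HT; rewrite (Kc_contr Hi E) => /is_vertexP [s /imfsetP [t /= Ht ->]]
  /imfsetP [w0 /= Hw0 ->].
have [Huv Hu Hv] := valid_contr HT Hi E.
have Hw0v : is_vertex w0 (Kc T i) by apply/is_vertexP; exists t.
split; [|by apply: cm_neq|by exists w0].
by rewrite /contr_map; case: ifP.
Qed.

Lemma vertex_back_incl T i sg w : i < size T -> stepn T i = Incl sg ->
  valid_tower T -> is_vertex w (Kc T i.+1) ->
  is_vertex w (Kc T i) \/ (sg = [fset w] /\ forall j, j <= i -> ~~ is_vertex w (Kc T j)).
Proof.
move=> Hi E HT; rewrite (Kc_incl Hi E) => /is_vertexP [s].
rewrite in_fset1U => /orP [/eqP -> Hw|Hs Hw]; last by left; apply/is_vertexP; exists s.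
have := HT i Hi; rewrite E => -[Hsg0 Hsgn Hfaces Hfresh].
case: (boolP (#|` sg| == 1)) => [/cardfs1P [x Ex]|Hn1].
  have Ewx : w = x by move: Hw; rewrite Ex => /fset1P.
  right; split; first by rewrite Ex Ewx.
  by apply: Hfresh => //; rewrite Ex cardfs1.
left; apply/is_vertexP; exists [fset w]; last by rewrite in_fset1.
apply: Hfaces; last by apply/eqP => /fsetP /(_ w); rewrite in_fset1 eqxx in_fset0.
rewrite fproperEneq fsub1set Hw andbT; apply/eqP => Ew.
by move: Hn1; rewrite -Ew cardfs1.
Qed.


Lemma imfset_cm_id u v (t : simplex) : u \notin t ->
  [fset contr_map u v w | w in t] = t.
Proof.
move=> Hu; rewrite -[RHS]imfset_id; apply: eq_in_imfset => w Hw /=.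
rewrite /contr_map; case: ifP => // /eqP Ew; by move: Hu; rewrite -Ew Hw.
Qed.

Lemma vertex_back T i w j : valid_tower T -> i < size T -> j <= i ->
  is_vertex w (Kc T i.+1) -> is_vertex w (Kc T j) -> is_vertex w (Kc T i).
Proof.
move=> HT Hi Hj Hv Hvj; case E: (stepn T i) Hv => [sg|a b] Hv.
  case: (vertex_back_incl Hi E HT Hv) => // -[_ Hf].
  by move: (Hf j Hj); rewrite Hvj.
by case: (vertex_back_contr Hi E HT Hv).
Qed.

Lemma persist T j k t : valid_tower T -> j + k <= size T -> t \in Kc T j ->
  (forall w, w \in t -> is_vertex w (Kc T (j + k))) -> t \in Kc T (j + k).
Proof.
move=> HT; elim: k => [|k IH] Hs Ht Hv; first by rewrite addn0.
have Hi : j + k < size T by rewrite -addnS.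
have Hv' : forall w, w \in t -> is_vertex w (Kc T (j + k)).
  move=> w Hw; apply: (vertex_back (j := j)) => //; first by rewrite leq_addr.
  - by rewrite -addnS; apply: Hv.
  - by apply/is_vertexP; exists t.
have Htk := IH (ltnW Hi) Ht Hv'.
rewrite addnS; case E: (stepn T (j + k)) => [sg|a b].
  by rewrite (Kc_incl Hi E) in_fset1U Htk orbT.
rewrite (Kc_contr Hi E); apply/imfsetP; exists t => //=.
rewrite imfset_cm_id //; apply/negP => Hu.
have := Hv _ Hu; rewrite addnS => Hvu.
by case: (vertex_back_contr Hi E HT Hvu); rewrite eqxx.
Qed.

Lemma incl_in T i sg : i < size T -> stepn T i = Incl sg -> sg \in Kc T i.+1.
Proof. by move=> Hi E; rewrite (Kc_incl Hi E) fset1U1. Qed.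

Lemma incl_uniq T i i' sg : valid_tower T -> i < i' -> i' < size T ->
  stepn T i = Incl sg -> stepn T i' = Incl sg -> False.
Proof.
move=> HT Hii' Hi' E E'.
have Hi : i < size T by apply: ltn_trans Hi'.
have Hin := incl_in Hi E.
have := HT i' Hi'; rewrite E' => -[Hsg0 Hsgn Hfaces Hfresh].
case: (boolP (#|` sg| == 1)) => [/cardfs1P [x Ex]|Hn1].
  have := Hfresh x; rewrite Ex cardfs1 => /(_ erefl (fset11 x) i.+1 Hii').
  move/negP; apply; apply/is_vertexP; exists [fset x]; first by rewrite -Ex.
  by rewrite in_fset1.
have Hle : (i.+1 + (i' - i.+1))%N = i' by rewrite subnKC.
move/negP: Hsgn; apply; rewrite -Hle; apply: persist => //; first by rewrite Hle ltnW.
move=> w Hw; rewrite Hle; apply/is_vertexP; exists [fset w]; last by rewrite in_fset1.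
apply: Hfaces; last by apply/eqP => /fsetP /(_ w); rewrite in_fset1 eqxx in_fset0.
rewrite fproperEneq fsub1set Hw andbT; apply/eqP => Ew.
by move: Hn1; rewrite -Ew cardfs1.
Qed.


Definition img T p k (sg : simplex) : simplex := [fset Fm T p k w | w in sg].

Lemma Fm_split T p q r w : p <= q -> q <= r ->
  Fm T p (r - p) w = Fm T q (r - q) (Fm T p (q - p) w).
Proof.
move=> Hpq Hqr.
have -> : (r - p = (q - p) + (r - q))%N by lia.
by rewrite Fm_add subnKC.
Qed.

Lemma Fm_step T j w : Fm T j 1 w = smap (state T j) (stepn T j) w.
Proof. by rewrite /= addn0. Qed.

Lemma Fm_lastS T p j w : p <= j ->
  Fm T p (j.+1 - p) w = smap (state T j) (stepn T j) (Fm T p (j - p) w).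
Proof. by move=> H; rewrite subSn //= subnKC. Qed.

Lemma Fm_vertex T i k w : valid_tower T -> (i + k <= size T)%N ->
  is_vertex w (Kc T i) -> is_vertex (Fm T i k w) (Kc T (i + k)).
Proof.
move=> HT; elim: k => [|k IH] Hs Hw /=; first by rewrite addn0.
rewrite addnS; apply: vertex_fwd => //; first by rewrite -addnS.
by apply: IH => //; apply: ltnW; rewrite -addnS.
Qed.

Lemma preimage T j s : valid_tower T -> j <= size T -> s \in Kc T j ->
  exists i sg, [/\ i < j, stepn T i = Incl sg & s = img T i.+1 (j - i.+1) sg].
Proof.
move=> HT; elim: j s => [|j IH] s Hj; first by rewrite /Kc /state take0 /= in_fset0.
have Hjs : j < size T by [].
case E: (stepn T j) => [sg|a b].
  rewrite (Kc_incl Hjs E) in_fset1U => /orP [/eqP ->|Hs].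
    exists j, sg; split => //; rewrite subnn /img /=.
    by rewrite -[LHS]imfset_id; apply: eq_imfset.
  have [i [sg' [Hij Ei ->]]] := IH s (ltnW Hjs) Hs.
  exists i, sg'; split => //; first by apply: ltnW.
  rewrite /img; apply: eq_imfset => // w.
  by rewrite Fm_lastS // E.
rewrite (Kc_contr Hjs E) => /imfsetP [t /= Ht ->].
have [i [sg' [Hij Ei ->]]] := IH t (ltnW Hjs) Ht.
exists i, sg'; split => //; first by apply: ltnW.
rewrite /img -imfset_comp; apply: eq_imfset => // w /=.
by rewrite Fm_lastS // E.
Qed.

Lemma nonprod_step T j w : valid_tower T -> j < size T ->
  ~~ produces T j w -> is_vertex w (Kc T j.+1) ->
  is_vertex w (Kc T j) /\ smap (state T j) (stepn T j) w = w.
Proof.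
move=> HT Hj; rewrite /produces; case E: (stepn T j) => [sg|a b] Hp Hv /=.
  case: (vertex_back_incl Hj E HT Hv) => // -[Esg _].
  by move: Hp; rewrite Esg eqxx.
have [Hv0 Hu _] := vertex_back_contr Hj E HT Hv.
split => //; rewrite /contr_map; case: ifP => // /eqP Ew.
by move: Hu; rewrite Ew /uof eqxx.
Qed.

Lemma label T j w : valid_tower T -> j <= size T -> is_vertex w (Kc T j) ->
  exists n, node_of T w j = Some n /\
    exists l, produces T n l /\ Fm T n.+1 (j - n.+1) l = w.
Proof.
move=> HT; elim: j w => [|j IH] w Hj Hv.
  by move: Hv => /is_vertexP [s]; rewrite /Kc /state take0 /= in_fset0.
rewrite node_ofS; case: ifP => Hp.
  by exists j; split => //; exists w; rewrite subnn.
have [Hv0 Hs] := nonprod_step HT Hj (negbT Hp) Hv.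
have [n [En [l [Hl Hf]]]] := IH w (ltnW Hj) Hv0.
exists n; split => //; exists l; split => //.
have [Hn _] := node_of_lt En.
by rewrite Fm_lastS // Hf Hs.
Qed.


Lemma in_subtree_refl T n : in_subtree T n n.
Proof. by rewrite /in_subtree /= eqxx. Qed.

Lemma child_in T j a b w m : stepn T j = Contr a b -> (w = a \/ w = b) ->
  node_of T w j = Some m -> m \in children T j.
Proof.
move=> E Hw Hm; rewrite /children E.
case: Hw => Hw; subst w; rewrite Hm /=; case: (node_of T _ j) => [na|] //=;
  rewrite ?inE ?eqxx ?orbT //.
Qed.

Lemma forward T i k w n : valid_tower T -> (i + k <= size T)%N ->
  is_vertex w (Kc T i) -> node_of T w i = Some n ->
  exists m, node_of T (Fm T i k w) (i + k) = Some m /\ in_subtree T n m.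
Proof.
move=> HT; elim: k => [|k IH] Hs Hw Hn.
  by exists n; rewrite addn0 /=; split => //; apply: in_subtree_refl.
have Hj : (i + k < size T)%N by rewrite -addnS.
have [m [Hm Hsub]] := IH (ltnW Hj) Hw Hn.
have Hv := Fm_vertex HT (ltnW Hj) Hw.
set w' := Fm T i k w in Hm Hv *.
rewrite /= addnS node_ofS.
case E: (stepn T (i + k)) => [sg|a b] /=.
  rewrite /produces E; case: ifP => [/eqP Esg|_]; last by exists m.
  have := HT _ Hj; rewrite E => -[_ _ _ Hf].
  by move: (Hf w'); rewrite Esg cardfs1 fset11 => /(_ erefl erefl _ (leqnn _)); rewrite Hv.
have := uv_spec T (i + k) a b; rewrite /uof /vof.
set u := (ord_pair _ a b).1; set v := (ord_pair _ a b).2 => Huv.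
rewrite /produces E -/v.
have [Hm' _] := node_of_lt Hm.
case: (boolP ((w' == u) || (w' == v))) => Hw'.
  have -> : contr_map u v w' = v.
    by rewrite /contr_map; case/orP: Hw' => /eqP ->; rewrite ?eqxx //; case: ifP => // /eqP.
  rewrite eqxx; exists (i + k)%N; split => //.
  rewrite /in_subtree /=; apply/orP; right; apply/hasP; exists m.
    apply: (child_in E _ Hm).
    by case/orP: Huv => /andP[/eqP Eu /eqP Ev]; case/orP: Hw' => /eqP ->; rewrite ?Eu ?Ev; auto.
  by apply: (in_sub_mono _ Hsub).
have -> : contr_map u v w' = w'.
  by rewrite /contr_map; case: ifP => // /eqP Ew; move: Hw'; rewrite Ew eqxx.
case: ifP => [/eqP Evw|_]; last by exists m.
by move: Hw'; rewrite Evw eqxx orbT.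
Qed.

Lemma sub_lab T x f z y lz ly : valid_tower T -> x <= size T ->
  in_sub T f z y -> y < x -> produces T z lz -> produces T y ly ->
  Fm T z.+1 (x - z.+1) lz = Fm T y.+1 (x - y.+1) ly.
Proof.
move=> HT Hx; elim: f y ly => [|f IH] y ly /=.
  by rewrite orbF => /eqP -> _ Hz Hy; rewrite (produces_uniq Hz Hy).
case/orP => [/eqP -> _ Hz Hy|]; first by rewrite (produces_uniq Hz Hy).
case/hasP => c Hc Hsub Hyx Hz Hy.
have [Hcy [a [b [E Hab]]]] := children_lt Hc.
have Hys : y < size T by apply: leq_trans Hx.
have [Huv Hu Hv] := valid_contr HT Hys E.
have := uv_spec T y a b.
set u := uof T y a b; set v := vof T y a b => Huvs.
have [a' [Ha' Ea']] : exists a', node_of T a' y = Some c /\ (a' == u) || (a' == v).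
  by case: Hab => H; [exists a|exists b]; split => //;
     case/orP: Huvs => /andP[/eqP -> /eqP ->]; rewrite eqxx ?orbT.
have Hprc := (node_of_lt Ha').2.
rewrite (IH c a' Hsub (ltn_trans Hcy Hyx) Hz Hprc).
have Hva' : is_vertex a' (Kc T y).
  by case/orP: Ea' => /eqP ->.
have [n [En [l [Hl Hf]]]] := label HT (ltnW Hys) Hva'.
move: En; rewrite Ha' => -[En]; subst n.
rewrite (produces_uniq Hl Hprc) in Hf.
rewrite (@Fm_split T c.+1 y x) // ?Hf; last by apply: ltnW.
have -> : (x - y = 1 + (x - y.+1))%N by lia.
rewrite Fm_add Fm_step E /=.
have -> : contr_map (ord_pair (state T y) a b).1 (ord_pair (state T y) a b).2 a' = v.
  rewrite -/(uof T y a b) -/(vof T y a b) -/u -/v /contr_map.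
  by case/orP: Ea' => /eqP ->; rewrite ?eqxx //; case: ifP => // /eqP.
move: Hy; rewrite /produces E => /eqP <-.
by rewrite addn1.
Qed.


Lemma act_starP w (L : complex) A t :
  reflect [/\ t \in L, t `<=` A & exists2 r, r \in L & (w \in r) && (t `<=` r)]
          (t \in act_star w L A).
Proof.
rewrite /act_star /closed_star !inE.
apply: (iffP idP).
  case/andP => /andP [Ht /existsP [r Hr]] HA; split => //.
  by exists (val r) => //; apply: fsvalP.
case=> Ht HA [r Hr Hwr]; rewrite Ht HA andbT /=.
by apply/existsP; exists [` Hr].
Qed.

Definition Inv T j :=
  [/\ forall t, (t \in Kc T j) = (t \in Khat T j) && (t `<=` cAct (state T j)),
      forall t t', t \in Khat T j -> t' `<=` t -> t' != fset0 -> t' \in Khat T j &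
      forall t w, t \in Khat T j -> w \in t -> exists2 j', j' <= j & is_vertex w (Kc T j')].

Lemma Inv_vert_act T j w : Inv T j -> is_vertex w (Kc T j) -> w \in cAct (state T j).
Proof.
move=> [H1 _ _] /is_vertexP [s Hs Hw].
by move: Hs; rewrite H1 => /andP [_ /fsubsetP]; apply.
Qed.

Lemma Inv_vert_single T j w : Inv T j -> is_vertex w (Kc T j) -> [fset w] \in Khat T j.
Proof.
move=> [H1 H2 _] /is_vertexP [s Hs Hw].
move: Hs; rewrite H1 => /andP [Hs _]; apply: (H2 s) => //.
  by rewrite fsub1set.
by apply/eqP => /fsetP /(_ w); rewrite in_fset1 eqxx in_fset0.
Qed.

Lemma fset1_neq0 (w : nat) : [fset w] != fset0.
Proof. by apply/eqP => /fsetP /(_ w); rewrite in_fset1 eqxx in_fset0. Qed.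

Lemma Inv0 T : Inv T 0.
Proof. by split => [t|t t'|t w]; rewrite /Kc /Khat /state take0 /= ?in_fset0. Qed.

Lemma Inv_incl T j sg : valid_tower T -> j < size T -> stepn T j = Incl sg ->
  Inv T j -> Inv T j.+1.
Proof.
move=> HT Hj E [H1 H2 H4].
have := HT j Hj; rewrite E => -[Hsg0 Hsgn Hfaces Hfresh].
have HK : Kc T j.+1 = sg |` Kc T j by rewrite /Kc stateS // E.
have HKh : Khat T j.+1 = sg |` Khat T j by rewrite /Khat stateS // E.
have HA : cAct (state T j.+1) =
   (if #|` sg| == 1 then cAct (state T j) `|` sg else cAct (state T j))
  by rewrite stateS // E.
have Hsub : sg `<=` cAct (state T j.+1).
  rewrite HA; case: ifP => [_|/negbT Hn1]; first by apply: fsubsetUr.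
  apply/fsubsetP => w Hw; apply: (@Inv_vert_act T j w (And3 H1 H2 H4)) => //.
  apply/is_vertexP; exists [fset w]; last by rewrite in_fset1.
  apply: Hfaces; last by apply: fset1_neq0.
  rewrite fproperEneq fsub1set Hw andbT; apply/eqP => Ew.
  by move: Hn1; rewrite -Ew cardfs1.
have HAA : cAct (state T j) `<=` cAct (state T j.+1).
  by rewrite HA; case: ifP => _ //; apply: fsubsetUl.
split.
- move=> t; rewrite HK HKh !in_fset1U.
  case: (boolP (t == sg)) => [/eqP ->|Hne] /=; first by rewrite Hsub.
  rewrite H1; apply/andP/andP => -[Ht Hta]; split => //.
    by apply: fsubset_trans HAA.
  move: Hta; rewrite HA; case: ifP => // /cardfs1P [x Ex] Hta.
  apply/fsubsetP => w Hw; have := fsubsetP Hta w Hw; rewrite in_fsetU => /orP [] //.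
  rewrite Ex in_fset1 => /eqP Ewx; subst w.
  have [j' Hj' Hv] := H4 t x Ht Hw.
  have := Hfresh x; rewrite Ex cardfs1 in_fset1 eqxx => /(_ erefl isT j' Hj').
  by rewrite Hv.
- move=> t t'; rewrite HKh !in_fset1U => /orP [/eqP ->|Ht] Ht't Hne.
    case: (boolP (t' == sg)) => //= Hne'.
    have : t' `<` sg by rewrite fproperEneq Hne' Ht't.
    by move/Hfaces => /(_ Hne); rewrite H1 => /andP [->].
  by rewrite (H2 t) // orbT.
- move=> t w; rewrite HKh in_fset1U => /orP [/eqP -> Hw|Ht Hw].
    exists j.+1 => //; apply/is_vertexP; exists sg => //.
    by rewrite HK fset1U1.
  by have [j' Hj' Hv] := H4 t w Ht Hw; exists j' => //; apply: leqW.
Qed.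

Lemma cm_img_U u v (tau : simplex) : u \notin tau ->
  [fset contr_map u v w | w in u |` tau] = v |` tau.
Proof.
move=> Hu; rewrite imfsetU1 imfset_cm_id //.
by rewrite /contr_map eqxx.
Qed.

Lemma fsetU1_in (v : nat) (t : simplex) : v \in t -> v |` t = t.
Proof.
move=> Hv; apply/fsetP => x; rewrite in_fset1U.
by case: (boolP (x == v)) => // /eqP ->; rewrite Hv.
Qed.

Lemma Inv_contr T j a b : valid_tower T -> j < size T -> stepn T j = Contr a b ->
  Inv T j -> Inv T j.+1.
Proof.
move=> HT Hj E [H1 H2 H4].
have [Huv Hu Hv] := valid_contr HT Hj E.
have HI : Inv T j by split.
set u := uof T j a b in Huv Hu; set v := vof T j a b in Huv Hv.
set K := Kc T j; set Kh := Khat T j; set A := cAct (state T j).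
have HK : Kc T j.+1 = [fset [fset contr_map u v w | w in (t : simplex)] | t in K]
  by rewrite (Kc_contr Hj E).
have HKh : Khat T j.+1 = Kh `|` [fset (v |` (t : simplex)) | t in act_star u Kh A]
  by rewrite /Khat stateS // E.
have HA : cAct (state T j.+1) = A `\ u by rewrite stateS // E.
have HuA : u \in A := Inv_vert_act HI Hu.
have HvA : v \in A := Inv_vert_act HI Hv.
have Hv1 : [fset v] \in Kh := Inv_vert_single HI Hv.
have HKKh : forall t, t \in K -> t \in Kh /\ t `<=` A.
  by move=> t; rewrite /K H1 => /andP.
split.
- move=> t'; rewrite HK HKh HA; apply/idP/idP.
    case/imfsetP => t /= Ht ->.
    have [HtKh HtA] := HKKh t Ht.
    apply/andP; split.
      case: (boolP (u \in t)) => Hut; last by rewrite imfset_cm_id // in_fsetU HtKh.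
      have Et : t = u |` (t `\ u) by rewrite fsetD1K.
      case: (boolP (t `\ u == fset0)) => [/eqP E0|Hne].
        rewrite Et E0 cm_img_U ?in_fset0 // in_fsetU.
        by rewrite fsetU0 Hv1.
      rewrite Et cm_img_U ?fsetD11 // in_fsetU; apply/orP; right.
      apply/imfsetP; exists (t `\ u) => //=.
      apply/act_starP; split.
      + by apply: (H2 t) => //; apply: fsubsetDl.
      + by apply: fsubset_trans HtA; apply: fsubsetDl.
      + by exists t => //; rewrite Hut fsubsetDl.
    apply/fsubsetP => x /imfsetP [w /= Hw ->]; rewrite in_fsetD1 cm_neq //=.
    rewrite /contr_map; case: ifP => // _; by apply: (fsubsetP HtA).
  case/andP; rewrite in_fsetU => /orP [Ht' Hsub|].
    have Hu' : u \notin t' by apply/negP => /(fsubsetP Hsub); rewrite fsetD11.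
    apply/imfsetP; exists t' => /=; last by rewrite imfset_cm_id.
    rewrite /K H1 Ht' /=; apply: fsubset_trans Hsub _; apply: fsubsetDl.
  case/imfsetP => tau /= /act_starP [Htau HtauA [r Hr /andP [Hur Htaur]]] -> Hsub.
  have Hu' : u \notin tau.
    apply/negP => Hut; have := fsubsetP Hsub u; rewrite in_fset1U Hut orbT.
    by move=> /(_ isT); rewrite fsetD11.
  apply/imfsetP; exists (u |` tau) => /=; last by rewrite cm_img_U.
  rewrite /K H1; apply/andP; split.
    apply: (H2 r) => //; last by apply/eqP => /fsetP /(_ u); rewrite fset1U1 in_fset0.
    by apply/fsubsetP => x; rewrite in_fset1U => /orP [/eqP ->//|/(fsubsetP Htaur)].
  by apply/fsubsetP => x; rewrite in_fset1U => /orP [/eqP ->//|/(fsubsetP HtauA)].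
- move=> t t'; rewrite HKh !in_fsetU => /orP [Ht Ht't Hne|].
    by rewrite (H2 t).
  case/imfsetP => tau /= /act_starP [Htau HtauA [r Hr /andP [Hur Htaur]]] -> Ht't Hne.
  case: (boolP (v \in tau)) => Hvtau.
    by rewrite (H2 tau) //; rewrite fsetU1_in in Ht't.
  case: (boolP (v \in t')) => Hvt'; last first.
    rewrite (H2 tau) //; apply/fsubsetP => x Hx.
    have := fsubsetP Ht't x Hx; rewrite in_fset1U => /orP [/eqP Ex|//].
    by move: Hvt'; rewrite -Ex Hx.
  case: (boolP (t' `\ v == fset0)) => [/eqP E0|Hne'].
    have -> : t' = [fset v] by rewrite -(fsetD1K Hvt') E0; apply/fsetP => x; rewrite !inE orbF.
    by rewrite Hv1.
  have Hsub' : t' `\ v `<=` tau.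
    apply/fsubsetP => x; rewrite in_fsetD1 => /andP [Hxv Hx].
    by have := fsubsetP Ht't x Hx; rewrite in_fset1U (negbTE Hxv).
  apply/orP; right; apply/imfsetP; exists (t' `\ v); last by rewrite /= fsetD1K.
  apply/act_starP; split.
  + by apply: (H2 tau).
  + by apply: fsubset_trans HtauA.
  + by exists r => //; rewrite Hur (fsubset_trans Hsub' Htaur).
- move=> t w; rewrite HKh in_fsetU => /orP [Ht Hw|].
    by have [j' Hj' Hv'] := H4 t w Ht Hw; exists j' => //; apply: leqW.
  case/imfsetP => tau /= /act_starP [Htau _ _] -> ; rewrite in_fset1U => /orP [/eqP ->|Hw].
    by exists j.
  by have [j' Hj' Hv'] := H4 tau w Htau Hw; exists j' => //; apply: leqW.
Qed.

Lemma Inv_all T j : valid_tower T -> j <= size T -> Inv T j.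
Proof.
move=> HT; elim: j => [|j IH] Hj; first by apply: Inv0.
case E: (stepn T j) => [sg|a b].
  by apply: (Inv_incl HT Hj E); apply: IH; apply: ltnW.
by apply: (Inv_contr HT Hj E); apply: IH; apply: ltnW.
Qed.


Lemma card_img_le (f : simplex -> simplex) (X : complex) : #|` f @` X| <= #|` X|.
Proof. by have := leq_imfset_card _ f (mem X). Qed.

Lemma card_U_le (X Y : complex) : #|` X `|` Y| <= #|` X| + #|` Y|.
Proof. by rewrite cardfsU leq_subr. Qed.

Lemma mem_sep (X : complex) (Q : pred simplex) t :
  (t \in [fset y in X | Q y]) = (t \in X) && Q t.
Proof. by rewrite !inE. Qed.

Definition Pset T x p q : complex :=
  [fset tau in act_star p (Khat T x) (cAct (state T x)) | q \notin tau].
Definition Sset T x p q : complex :=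
  [fset s in Kc T x | (p \in s) && (q \notin s)].

Lemma memP T x p q t : (t \in Pset T x p q) =
  (t \in act_star p (Khat T x) (cAct (state T x))) && (q \notin t).
Proof. by rewrite mem_sep. Qed.

Lemma memS T x p q t : (t \in Sset T x p q) = (t \in Kc T x) && ((p \in t) && (q \notin t)).
Proof. by rewrite mem_sep. Qed.

Lemma P_bound T x p q : valid_tower T -> x <= size T -> p != q ->
  is_vertex p (Kc T x) -> #|` Pset T x p q| <= 2 * #|` Sset T x p q|.
Proof.
move=> HT Hx Hpq Hp.
have HI := Inv_all HT Hx; have [H1 H2 H4] := HI.
have HpA := Inv_vert_act HI Hp.
set P := Pset T x p q; set S := Sset T x p q.
set P1 := [fset tau in P | p \in tau]; set P2 := [fset tau in P | p \notin tau].
have HP : P `<=` P1 `|` P2.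
  by apply/fsubsetP => t Ht; rewrite in_fsetU !(mem_sep P) Ht /=; case: (p \in t).
have HP1 : P1 `<=` S.
  apply/fsubsetP => t; rewrite (mem_sep P) memP => /andP [/andP [/act_starP [Ht HtA _] Hq] Hpt].
  by rewrite memS H1 Ht HtA Hpt Hq.
have HP2 : P2 `<=` (fun s => s `\ p) @` S.
  apply/fsubsetP => t; rewrite (mem_sep P) memP => /andP [/andP [/act_starP [Ht HtA [r Hr /andP [Hpr Htr]]] Hq] Hpt].
  apply/imfsetP; exists (p |` t); last by rewrite fsetU1K.
  rewrite memS fset1U1 in_fset1U negb_or Hq /=.
  have -> : q != p by rewrite eq_sym.
  rewrite H1 ?andbT; apply/andP; split.
    apply: (H2 r) => //; last by apply/eqP => /fsetP /(_ p); rewrite fset1U1 in_fset0.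
    by apply/fsubsetP => y; rewrite in_fset1U => /orP [/eqP ->//|/(fsubsetP Htr)].
  by apply/fsubsetP => y; rewrite in_fset1U => /orP [/eqP ->//|/(fsubsetP HtA)].
apply: leq_trans (fsubset_leq_card HP) _.
apply: leq_trans (card_U_le _ _) _.
rewrite mul2n -addnn leq_add ?(fsubset_leq_card HP1) //.
by apply: leq_trans (fsubset_leq_card HP2) (card_img_le _ _).
Qed.

Lemma cost_bound T x a b : valid_tower T -> x < size T -> stepn T x = Contr a b ->
  let u := uof T x a b in let v := vof T x a b in
  cost T x <= #|` Pset T x u v| /\ cost T x <= #|` Pset T x v u|.
Proof.
move=> HT Hx E u v.
have HI := Inv_all HT (ltnW Hx); have [H1 H2 H4] := HI.
have [Huv Hu Hv] := valid_contr HT Hx E.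
set Kh := Khat T x; set A := cAct (state T x).
set Au := act_star u Kh A; set Av := act_star v Kh A.
have HKh : Khat T x.+1 = Kh `|` [fset (v |` (t : simplex)) | t in Au]
  by rewrite /Khat stateS // E.
have Hcard : #|` Au| <= #|` Av|.
  by have /andP [_] := ord_pair_spec (state T x) a b.
have Hne : forall t : simplex, v |` t != fset0.
  by move=> t; apply/eqP => /fsetP /(_ v); rewrite fset1U1 in_fset0.
have Hdiff : Khat T x.+1 `\` Kh `<=` (fun t => v |` t) @` (Au `\` Av).
  apply/fsubsetP => s; rewrite HKh in_fsetD in_fsetU => /andP [Hn /orP [Hs|]].
    by rewrite Hs in Hn.
  case/imfsetP => t /= Ht Es; apply/imfsetP; exists t => //.
  rewrite in_fsetD Ht andbT; apply/negP => /act_starP [Htk _ [r Hr /andP [Hvr Htr]]].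
  move/negP: Hn; apply; rewrite Es; apply: (H2 r) => //.
  by apply/fsubsetP => y; rewrite in_fset1U => /orP [/eqP ->//|/(fsubsetP Htr)].
have HAuv : Au `\` Av `<=` Pset T x u v.
  apply/fsubsetP => t; rewrite in_fsetD memP => /andP [Hn Ht]; rewrite Ht /=.
  apply/negP => Hvt; move/negP: Hn; apply.
  have /act_starP [Htk HtA _] := Ht.
  by apply/act_starP; split => //; exists t => //; rewrite Hvt fsubset_refl.
have HAvu : Av `\` Au `<=` Pset T x v u.
  apply/fsubsetP => t; rewrite in_fsetD memP => /andP [Hn Ht]; rewrite Ht /=.
  apply/negP => Hut; move/negP: Hn; apply.
  have /act_starP [Htk HtA _] := Ht.
  by apply/act_starP; split => //; exists t => //; rewrite Hut fsubset_refl.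
have Hc1 : cost T x <= #|` Au `\` Av|.
  by apply: leq_trans (fsubset_leq_card Hdiff) (card_img_le _ _).
split; first by apply: leq_trans Hc1 (fsubset_leq_card HAuv).
apply: leq_trans Hc1 _; apply: leq_trans _ (fsubset_leq_card HAvu).
rewrite !cardfsD fsetIC; exact: leq_sub2r.
Qed.


Lemma memE T y sg : sg \in E T y <->
  exists i, [/\ i < size T, stepn T i = Incl sg &
    exists2 w, w \in sg & exists2 n, node_of T w i.+1 = Some n & in_subtree T n y].
Proof.
rewrite /E in_fset /= mem_pmap; split.
  case/mapP => i; rewrite mem_iota add0n /= => Hi.
  case E: (stepn T i) => [s|a b] //; case: ifP => // /existsP [w Hw] [Es]; subst s.
  exists i; split => //; exists (val w); first by apply: fsvalP.
  by move: Hw; case: (node_of T (val w) i.+1) => // n Hn; exists n.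
case=> i [Hi E [w Hw [n Hn Hsub]]]; apply/mapP; exists i.
  by rewrite mem_iota add0n.
rewrite E; case: ifP => // /negbT /existsP []; exists [` Hw] => /=.
by rewrite Hn.
Qed.

Definition ipred (sg : simplex) (s : step) : bool :=
  if s is Incl s' then s' == sg else false.

Definition hmap T x (sg : simplex) : simplex :=
  let i := find (ipred sg) T in img T i.+1 (x - i.+1) sg.

Lemma find_incl T i sg : valid_tower T -> i < size T -> stepn T i = Incl sg ->
  find (ipred sg) T = i.
Proof.
move=> HT Hi E.
have Hhas : has (ipred sg) T.
  by apply/(has_nthP (Incl fset0)); exists i => //; rewrite -/(stepn T i) E /= eqxx.
have Hle : find (ipred sg) T <= i.
  rewrite leqNgt; apply/negP => Hlt.
  by have := before_find (Incl fset0) Hlt; rewrite -/(stepn T i) E /= eqxx.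
have := nth_find (Incl fset0) Hhas; rewrite -/(stepn T _).
case E0: (stepn T _) => [s|] //= /eqP Es; subst s.
move: Hle; rewrite leq_eqVlt => /orP [/eqP //|Hlt].
by case: (incl_uniq HT Hlt Hi E0 E).
Qed.

Lemma incl_same T i i' sg : valid_tower T -> i < size T -> i' < size T ->
  stepn T i = Incl sg -> stepn T i' = Incl sg -> i = i'.
Proof.
move=> HT Hi Hi' E E'; case: (ltngtP i i') => // H.
  by case: (incl_uniq HT H Hi' E E').
by case: (incl_uniq HT H Hi E' E).
Qed.

Lemma S_to_E T x p q np nq : valid_tower T -> x < size T -> p != q ->
  is_vertex q (Kc T x) -> node_of T p x = Some np -> node_of T q x = Some nq ->
  #|` Sset T x p q| <= #|` E T np `\` E T nq|.
Proof.
move=> HT Hx Hpq Hqv Hnp Hnq.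
have Hsub : Sset T x p q `<=` hmap T x @` (E T np `\` E T nq).
  apply/fsubsetP => s; rewrite memS => /andP [Hs /andP [Hps Hqs]].
  have [i [sg [Hix Ei Es]]] := preimage HT (ltnW Hx) Hs.
  have Hi : i < size T by apply: ltn_trans Hx.
  have Hfind := find_incl HT Hi Ei.
  have Hsgin := incl_in Hi Ei.
  have Hix' : (i.+1 + (x - i.+1) = x)%N by rewrite subnKC.
  apply/imfsetP; exists sg; last by rewrite /hmap Hfind.
  rewrite in_fsetD; apply/andP; split.
    apply/negP => /memE [i' [Hi' Ei' [w' Hw' [n' Hn' Hsub']]]].
    have Eii := incl_same HT Hi Hi' Ei Ei'; subst i'.
    have Hw'v : is_vertex w' (Kc T i.+1) by apply/is_vertexP; exists sg.
    have [n'' [En'' [l' [Hl' Hf']]]] := label HT Hi Hw'v.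
    move: En''; rewrite Hn' => -[En'']; subst n''.
    have [nq' [Enq' [lq [Hlq Hfq]]]] := label HT (ltnW Hx) Hqv.
    move: Enq'; rewrite Hnq => -[Enq']; subst nq'.
    have [Hnqx _] := node_of_lt Hnq.
    have [Hn'i _] := node_of_lt Hn'.
    have := sub_lab HT (ltnW Hx) Hsub' Hnqx Hl' Hlq.
    rewrite Hfq (@Fm_split T n'.+1 i.+1 x) // Hf' => Eq.
    move/negP: Hqs; apply; rewrite Es /img -Eq.
    by apply/imfsetP; exists w'.
  apply/memE; exists i; split => //.
  move: Hps; rewrite Es => /imfsetP [w /= Hw Ep].
  exists w => //.
  have Hwv : is_vertex w (Kc T i.+1) by apply/is_vertexP; exists sg.
  have [n [En _]] := label HT Hi Hwv.
  exists n => //.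
  have Hle : (i.+1 + (x - i.+1) <= size T)%N by rewrite Hix' ltnW.
  have [m [Hm Hsubm]] := forward HT Hle Hwv En.
  by move: Hm; rewrite Hix' -Ep Hnp => -[->].
apply: leq_trans (fsubset_leq_card Hsub) _.
by have := leq_imfset_card _ (hmap T x) (mem (E T np `\` E T nq)).
Qed.

End Aux.
Import Aux.

Theorem lemma8 (T : seq step) (HT : valid_tower T) (x y1 y2 : nat)
  (Hx : is_internal T x) (Hy1 : y1 \in children T x)
  (Hy2 : y2 \in children T x) (Hy12 : y1 != y2) :
  cost T x <= 2 * #|` (E T y1 `\` E T y2)%fset|.
Proof.
move: Hx; rewrite /is_internal => /andP [Hxs].
case Ex: (stepn T x) => [//|a b] _.
have [Huv Hu Hv] := valid_contr HT Hxs Ex.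
have Hspec := uv_spec T x a b.
have [Hc1 Hc2] := cost_bound HT Hxs Ex.
set u := uof T x a b in Huv Hu Hv Hspec Hc1 Hc2.
set v := vof T x a b in Huv Hu Hv Hspec Hc1 Hc2.
have key : forall p q np nq, (p == u) && (q == v) || (p == v) && (q == u) ->
    node_of T p x = Some np -> node_of T q x = Some nq ->
    cost T x <= 2 * #|` (E T np `\` E T nq)%fset|.
  move=> p q np nq Hpq Hnp Hnq.
  have [Hc Hpq' Hpv Hqv] : [/\ cost T x <= #|` Pset T x p q|, p != q,
       is_vertex p (Kc T x) & is_vertex q (Kc T x)].
    by case/orP: Hpq => /andP [/eqP -> /eqP ->]; split => //; rewrite eq_sym.
  apply: leq_trans Hc _; apply: leq_trans (P_bound HT (ltnW Hxs) Hpq' Hpv) _.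
  by rewrite leq_mul2l (S_to_E HT Hxs Hpq' Hqv Hnp Hnq) orbT.
have Hs1 : (a == u) && (b == v) || (a == v) && (b == u).
  by case/orP: Hspec => /andP [/eqP -> /eqP ->]; rewrite !eqxx ?orbT.
have Hs2 : (b == u) && (a == v) || (b == v) && (a == u).
  by case/orP: Hspec => /andP [/eqP -> /eqP ->]; rewrite !eqxx ?orbT.
move: Hy1 Hy2; rewrite /children Ex.
case Ha: (node_of T a x) => [na|]; case Hb: (node_of T b x) => [nb|] /= H1 H2;
  rewrite !inE in H1 H2.
- case/orP: H1 => /eqP E1; case/orP: H2 => /eqP E2; rewrite E1 E2 ?eqxx // in Hy12 *.
  + exact: (key a b).
  + exact: (key b a).
- by move/eqP: H1 => E1; move/eqP: H2 => E2; rewrite E1 E2 eqxx in Hy12.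
- by move/eqP: H1 => E1; move/eqP: H2 => E2; rewrite E1 E2 eqxx in Hy12.
- by [].
Qed.
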